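(* Let $\mathcal{L}$ be a regular linear space of real symmetric $n\times n$ matrices whose ML degree is $0$. Then $\mathcal{L}$ has empty intersection with the interior of the cone of positive semidefinite matrices (i.e. $\mathcal{L}$ contains no positive definite matrix).
   Context: For a linear subspace $\mathcal{L}$ of symmetric matrices (its ML degree being that of its complex span in $\mathbb{S}^n$, the space of complex symmetric $n\times n$ matrices): $\mathcal{L}$ is regular if it contains a full-rank matrix; $\mathcal{L}^\perp=\{\Sigma\in\mathbb{S}^n:\mathrm{tr}(K\Sigma)=0\ \forall K\in\mathcal{L}\}$; the reciprocal variety $\mathcal{L}^{-1}$ is the Zariski closure of the set of inverses of invertible matrices in $\mathcal{L}$; the ML degree is the number of matrices in $\mathcal{L}^{-1}\cap(\mathcal{L}^\perp+S)$ for generic $S\in\mathbb{S}^n$. *)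

(* Defs.v *)
From HB Require Import structures.
From mathcomp Require Import all_boot all_order all_algebra.
From mathcomp Require Import reals complex.
From mathcomp Require mpoly.

Set Implicit Arguments.
Unset Strict Implicit.
Unset Printing Implicit Defensive.

Import Order.TTheory GRing.Theory Num.Theory.
Local Open Scope ring_scope.

Section MLDefs.
Variables (R : realType) (n d : nat).
Local Notation C := (R[i]).

(* The real linear space L is the row space of B, matrices being encoded
   as row vectors through mxvec. *)
Definition inL (B : 'M[R]_(d, n * n)) (K : 'M[R]_n) : bool :=
  (mxvec K <= B)%MS.

Definition inLC (B : 'M[R]_(d, n * n)) (K : 'M[C]_n) : bool :=
  (mxvec K <= map_mx (@real_complex R) B)%MS.

Definition sym_space (B : 'M[R]_(d, n * n)) : Prop :=
  forall K : 'M[R]_n, inL B K -> K^T = K.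

Definition regular (B : 'M[R]_(d, n * n)) : Prop :=
  exists K : 'M[R]_n, inL B K /\ K \in unitmx.

Definition Lperp (B : 'M[R]_(d, n * n)) (S : 'M[C]_n) : Prop :=
  S^T = S /\ forall K : 'M[C]_n, inLC B K -> \tr (K *m S) = 0.

Definition mx_eval (p : mpoly.mpoly (n * n) C) (A : 'M[C]_n) : C :=
  mpoly.meval (fun i => mxvec A 0 i) p.

Definition zariski_closure (E : 'M[C]_n -> Prop) (X : 'M[C]_n) : Prop :=
  forall p : mpoly.mpoly (n * n) C,
    (forall Y, E Y -> mx_eval p Y = 0) -> mx_eval p X = 0.

Definition recip_variety (B : 'M[R]_(d, n * n)) : 'M[C]_n -> Prop :=
  zariski_closure (fun Y => exists K : 'M[C]_n,
                      [/\ inLC B K, K \in unitmx & Y = invmx K]).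

Definition ML_set (B : 'M[R]_(d, n * n)) (S X : 'M[C]_n) : Prop :=
  recip_variety B X /\ exists Sig : 'M[C]_n, Lperp B Sig /\ X = Sig + S.

(* "The ML degree of L is m": for generic S in S^n (i.e. S outside the zero
   set of some polynomial not vanishing identically on S^n), the set
   L^{-1} \cap (L^perp + S) consists of exactly m matrices. *)
Definition ML_degree_is (B : 'M[R]_(d, n * n)) (m : nat) : Prop :=
  exists p : mpoly.mpoly (n * n) C,
    (exists S0 : 'M[C]_n, S0^T = S0 /\ mx_eval p S0 != 0) /\
    forall S : 'M[C]_n, S^T = S -> mx_eval p S != 0 ->
      exists s : seq 'M[C]_n,
        [/\ uniq s, size s = m & forall X, ML_set B S X <-> X \in s].

Definition posdef (K : 'M[R]_n) : Prop :=
  forall v : 'cV[R]_n, v != 0 -> 0 < (v^T *m K *m v) 0 0.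

End MLDefs.

(* Main.v *)
Require Import Defs.
From HB Require Import structures.
From mathcomp Require Import all_boot all_order all_algebra.
From mathcomp Require Import reals complex.
From mathcomp Require Import mpoly.
Set Implicit Arguments.
Unset Strict Implicit.
Unset Printing Implicit Defensive.
Import Order.TTheory GRing.Theory Num.Theory Num.Def.
Local Open Scope ring_scope.
From mathcomp Require Import ring zify.
Section HomE.
Variables (k : nat) (F A : comNzRingType) (f : {rmorphism F -> A}).
Definition homE N (p : {mpoly F[k]}) (t : A) (x : 'I_k -> A) : A :=
  \sum_(m <- msupp p) f p@_m * (t ^+ (N - mdeg m) * \prod_(i < k) x i ^+ m i).
Lemma homE_scale N p t y : (msize p <= N)%N ->
  homE N p t (fun i => t * y i) = t ^+ N * homE N p 1 y.
Proof.
move=> hN; rewrite /homE mulr_sumr; apply: eq_big_seq => m Hm.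
have hm : (mdeg m <= N)%N by apply: leq_trans (ltnW (msize_mdeg_lt Hm)) hN.
rewrite expr1n mul1r.
under eq_bigr do rewrite exprMn.
rewrite big_split /= prodrXr -mdegE [t ^+ (N - _) * _]mulrA -exprD subnK //.
by rewrite mulrCA.
Qed.
Lemma homE_ext N p t x y : x =1 y -> homE N p t x = homE N p t y.
Proof.
move=> e; apply: eq_bigr => m _; congr (_ * (_ * _)).
by apply: eq_bigr => i _; rewrite e.
Qed.
End HomE.

Section HomE2.
Variables (k : nat) (F : comNzRingType).
Lemma homE_meval N (p : {mpoly F[k]}) y : homE (idfun : {rmorphism F -> F}) N p 1 y = meval y p.
Proof. by rewrite /homE mevalE; apply: eq_bigr => m _; rewrite expr1n mul1r. Qed.

Lemma homE_horner N (p : {mpoly F[k]}) t x z :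
  (homE (polyC : {rmorphism F -> {poly F}}) N p t x).[z] = homE (idfun : {rmorphism F -> F}) N p t.[z] (fun i => (x i).[z]).
Proof.
rewrite /homE horner_sum; apply: eq_bigr => m _.
by rewrite hornerM hornerC hornerM horner_exp horner_prod; under eq_bigr do rewrite horner_exp.
Qed.
End HomE2.

Section Cong.
Variables (F : fieldType) (m : nat).
Definition cong (a b : {poly F}) := ('X^m %| a - b)%R.
Lemma cong_refl a : cong a a. Proof. by rewrite /cong subrr dvdp0. Qed.
Lemma cong_add a b c d : cong a b -> cong c d -> cong (a + c) (b + d).
Proof. rewrite /cong => h1 h2; have -> : a + c - (b + d) = (a - b) + (c - d) by ring.
by apply: dvdp_add. Qed.
Lemma cong_mul a b c d : cong a b -> cong c d -> cong (a * c) (b * d).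
Proof. rewrite /cong => h1 h2; have -> : a * c - b * d = a * (c - d) + (a - b) * d by ring.
by apply: dvdp_add; [apply: dvdp_mull | apply: dvdp_mulr]. Qed.
Lemma cong_exp a b e : cong a b -> cong (a ^+ e) (b ^+ e).
Proof. move=> h; elim: e => [|e ih]; first exact: cong_refl.
by rewrite !exprS cong_mul. Qed.
Lemma cong_sum (I : Type) (r : seq I) (P : pred I) (G H : I -> {poly F}) :
  (forall i, P i -> cong (G i) (H i)) -> cong (\sum_(i <- r | P i) G i) (\sum_(i <- r | P i) H i).
Proof. move=> h; apply: (big_ind2 cong) => //; [exact: cong_refl | exact: cong_add]. Qed.
Lemma cong_prod (I : Type) (r : seq I) (P : pred I) (G H : I -> {poly F}) :
  (forall i, P i -> cong (G i) (H i)) -> cong (\prod_(i <- r | P i) G i) (\prod_(i <- r | P i) H i).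
Proof. move=> h; apply: (big_ind2 cong) => //; [exact: cong_refl | exact: cong_mul]. Qed.
Lemma homE_cong k N (p : {mpoly F[k]}) t x y : (forall i, cong (x i) (y i)) ->
  cong (homE (polyC : {rmorphism F -> {poly F}}) N p t x) (homE (polyC : {rmorphism F -> {poly F}}) N p t y).
Proof.
move=> h; apply: cong_sum => mm _; apply: cong_mul; first exact: cong_refl.
apply: cong_mul; first exact: cong_refl.
by apply: cong_prod => i _; apply: cong_exp.
Qed.
End Cong.
Section Pos.
Variables (R : realType) (n : nat).
Local Notation C := (R[i]).
Local Notation rc := (@real_complex_def R (Phant R)).
Local Open Scope sesquilinear_scope.

Lemma rc_real (x : R) : rc x \is Num.real.
Proof. by rewrite /= complex_real. Qed.

Lemma conj_rc (x : R) : (rc x)^* = rc x.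
Proof. by rewrite conj_Creal // rc_real. Qed.

Lemma map_rc_conj p q (A : 'M[R]_(p, q)) : (map_mx rc A) ^ conjC = map_mx rc A.
Proof. by apply/matrixP => i j; rewrite !mxE conj_rc. Qed.

Lemma trmx11 (T : Type) (x : 'M[T]_1) : x^T = x.
Proof. by apply/matrixP => i j; rewrite !ord1 mxE. Qed.

Lemma cmx_decomp (v : 'rV[C]_n) :
  v = map_mx rc (map_mx (@complex.Re R) v) + 'i%C *: map_mx rc (map_mx (@complex.Im R) v).
Proof. by apply/matrixP => i j; rewrite !mxE {1}[v i j]complexE. Qed.

Lemma qf_ge0 (M : 'M[R]_n) : (forall v : 'cV_n, v != 0 -> 0 < (v^T *m M *m v) 0 0) ->
  forall a : 'rV_n, 0 <= (a *m M *m a^T) 0 0 /\ (a != 0 -> 0 < (a *m M *m a^T) 0 0).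
Proof.
move=> hM a; have h : a != 0 -> 0 < (a *m M *m a^T) 0 0.
  by move=> ha; have := hM a^T; rewrite trmxK; apply; rewrite trmx_eq0.
split => //; have [->|/h/ltW//] := eqVneq a 0.
by rewrite mul0mx mul0mx mxE.
Qed.

Lemma entry_lin (X1 X2 X3 X4 : 'M[C]_1) (c : C) :
  (X1 + c *: X2 + c *: - (X3 + c *: X4)) 0 0 = X1 0 0 + c * X2 0 0 + c * - (X3 0 0 + c * X4 0 0).
Proof. by rewrite !mxE. Qed.

Lemma cqf_gt0 (M : 'M[R]_n) : M^T = M ->
  (forall v : 'cV_n, v != 0 -> 0 < (v^T *m M *m v) 0 0) ->
  forall v : 'rV[C]_n, v != 0 -> 0 < (v *m map_mx rc M *m v^t*) 0 0.
Proof.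
move=> sM hM v vn0.
set a := map_mx (@complex.Re R) v; set b := map_mx (@complex.Im R) v.
have ev : v = map_mx rc a + 'i%C *: map_mx rc b by exact: cmx_decomp.
have evc : v ^ conjC = map_mx rc a - 'i%C *: map_mx rc b.
  apply/matrixP => i j; rewrite ev !mxE rmorphD rmorphM /= !conj_rc.
  by rewrite complexiE conjCi mulNr.
have sym1 : (map_mx rc b *m map_mx rc M *m (map_mx rc a)^T) 0 0
          = (map_mx rc a *m map_mx rc M *m (map_mx rc b)^T) 0 0.
  have e : (map_mx rc a *m map_mx rc M *m (map_mx rc b)^T)^T
          = map_mx rc b *m map_mx rc M *m (map_mx rc a)^T.
    by rewrite !trmx_mul trmxK (map_trmx _ M) sM mulmxA.
  by rewrite -e mxE.
have -> : (v *m map_mx rc M *m v^t*) 0 0 =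
   rc ((a *m M *m a^T) 0 0 + (b *m M *m b^T) 0 0).
  rewrite -map_trmx evc {1}ev !linearD /= !linearN /= !linearZ /=.
  have E1 (c : 'rV_n) : rc ((c *m M *m c^T) 0 0) = (map_mx rc c *m map_mx rc M *m (map_mx rc c)^T) 0 0.
    by rewrite map_trmx -!map_mxM [RHS]mxE.
  have rcD (x y : R) : rc (x + y) = rc x + rc y by apply/eqP; rewrite eq_complex /= addr0 !eqxx.
  rewrite rcD !E1 !mulmxDl -!scalemxAl.
  move: sym1.
  set X1 := map_mx rc a *m map_mx rc M *m (map_mx rc a)^T.
  set X2 := map_mx rc b *m map_mx rc M *m (map_mx rc a)^T.
  set X3 := map_mx rc a *m map_mx rc M *m (map_mx rc b)^T.
  set X4 := map_mx rc b *m map_mx rc M *m (map_mx rc b)^T.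
  move=> sym1; rewrite entry_lin sym1.
  set x := X1 0 0; set y := X3 0 0; set z := X4 0 0.
  have hi : 'i%C * 'i%C = -1 :> C by rewrite -expr2 sqr_i.
  apply/eqP; rewrite -subr_eq0; apply/eqP.
  have -> : x + 'i%C * y + 'i%C * - (y + 'i%C * z) - (x + z) = - ('i%C * 'i%C + 1) * z by ring.
  by rewrite hi addNr oppr0 mul0r.
have [ha hb] : (0 <= (a *m M *m a^T) 0 0) /\ (0 <= (b *m M *m b^T) 0 0).
  by split; apply: (qf_ge0 hM _).1.
rewrite ltcR.
have [a0|an0] := eqVneq a 0.
  have bn0 : b != 0.
    apply: contra vn0 => /eqP b0; apply/eqP; rewrite ev a0 b0 !map_mx0 scaler0 addr0 //.
  by rewrite ltr_wpDl // (qf_ge0 hM _).2.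
by rewrite ltr_wpDr // (qf_ge0 hM _).2.
Qed.
End Pos.
Section Pos2.
Variables (R : realType) (n : nat).
Local Notation C := (R[i]).
Local Notation rc := (@real_complex_def R (Phant R)).
Local Open Scope sesquilinear_scope.

Lemma mxtrace_map (F G : nzRingType) (f : {additive F -> G}) (A : 'M[F]_n) :
  \tr (map_mx f A) = f (\tr A).
Proof. by rewrite /mxtrace raddf_sum; apply: eq_bigr => i _; rewrite mxE. Qed.

Lemma rowcol_entry (T : pzRingType) p q r (A : 'M[T]_(p, q)) (B : 'M[T]_(q, r)) i j :
  (row i A *m col j B) 0 0 = (A *m B) i j.
Proof. by rewrite !mxE; apply: eq_bigr => k _; rewrite !mxE. Qed.

Lemma trc_gen (T : comPzRingType) (P Q D X M : 'M[T]_n) :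
  Q *m P = 1%:M -> P *m Q = 1%:M -> M = Q *m D *m P ->
  \tr (D *m (P *m X *m Q) *m D *m (P *m X *m Q)) = \tr (X *m M *m X *m M).
Proof.
move=> _ _ ->.
rewrite [RHS](_ : _ = \tr ((X *m Q) *m (D *m P *m X *m Q *m D *m P))); last by rewrite !mulmxA.
by rewrite [RHS]mxtrace_mulC !mulmxA.
Qed.

Lemma pos_tr (M X : 'M[R]_n) : M^T = M ->
  (forall v : 'cV_n, v != 0 -> 0 < (v^T *m M *m v) 0 0) ->
  X^T = X -> \tr (X *m M *m X *m M) = 0 -> X = 0.
Proof.
move=> sM hM sX trz.
set Mc := map_mx rc M; set Xc := map_mx rc X.
have McH : Mc^t* = Mc by rewrite /Mc map_trmx sM map_rc_conj.
have XcH : Xc^t* = Xc by rewrite /Xc map_trmx sX map_rc_conj.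
have Mn : Mc \is normalmx by apply/normalmxP; rewrite McH.
have := spectral_unitarymx Mc; have := orthomx_spectralP Mn.
move: (spectralmx Mc) (spectral_diag Mc) => P sp Meq Pu.
have PPt : P *m P^t* = 1%:M by apply/unitarymxP.
have PtP : P^t* *m P = 1%:M by rewrite -invmx_unitary // mulVmx // unitarymx_unit.
rewrite invmx_unitary // in Meq.
have Dq : P *m Mc *m P^t* = diag_mx sp.
  by rewrite Meq !mulmxA PPt mul1mx -mulmxA PPt mulmx1.
have spos i : 0 < sp 0 i.
  have -> : sp 0 i = (row i P *m Mc *m (row i P)^t*) 0 0.
    have dE : (diag_mx sp) i i = sp 0 i by rewrite mxE eqxx mulr1n.
    rewrite -dE -Dq.
    by rewrite -row_mul tr_row map_col rowcol_entry.
  apply: cqf_gt0 => //; apply/negP => /eqP r0.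
  have := congr1 (fun A : 'M[C]_n => row i A) PPt; rewrite /= row_mul r0 mul0mx.
  move=> /(congr1 (fun A : 'rV_n => A 0 i)); rewrite !mxE eqxx /= => /eqP.
  by rewrite eq_sym oner_eq0.
set Y := P *m Xc *m P^t*.
have YH : Y^t* = Y by rewrite /Y !trmx_mul !map_mxM trmxCK XcH mulmxA.
have Yc i j : Y j i = (Y i j)^*.
  by have := congr1 (fun A : 'M[C]_n => A j i) YH; rewrite /= !mxE => <-.
have trc : \tr (diag_mx sp *m Y *m diag_mx sp *m Y) = 0.
  rewrite /Y (@trc_gen _ P (P^t*) (diag_mx sp) Xc Mc PtP PPt Meq).
  by rewrite /Xc /Mc -!map_mxM (mxtrace_map (real_complex R)) trz.
have Ydef : Y = P *m Xc *m P^t* by [].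
clearbody Y.
have trE : \tr (diag_mx sp *m Y *m diag_mx sp *m Y) =
    \sum_i \sum_j (sp 0 i * sp 0 j) * (Y i j * (Y i j)^*).
  rewrite mul_diag_mx mul_mx_diag /mxtrace; apply: eq_bigr => i _.
  rewrite [LHS]mxE; apply: eq_bigr => j _; rewrite !mxE -Yc; ring.
have w0 (i j : 'I_n) : 0 <= (sp 0 i * sp 0 j) * (Y i j * (Y i j)^*).
  by rewrite mulr_ge0 ?mul_conjC_ge0 // mulr_ge0 // ltW.
have Y0 : Y = 0.
  apply/matrixP => i j; rewrite mxE.
  have h1 := psumr_eq0P (fun i _ => sumr_ge0 _ (fun j _ => w0 i j)) (etrans (esym trE) trc).
  have h2 := @psumr_eq0P _ _ _ _ (fun j _ => w0 i j) (h1 i isT) j isT.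
  move: h2 => /eqP; rewrite mulf_eq0 mul_conjC_eq0 mulf_eq0 (gt_eqF (spos i)) (gt_eqF (spos j)) /= => /eqP //.
have Xc0 : Xc = 0.
  have : P^t* *m Y *m P = Xc by rewrite Ydef !mulmxA PtP mul1mx -mulmxA PtP mulmx1.
  by rewrite Y0 mulmx0 mul0mx => <-.
by apply/eqP; rewrite -(map_mx_eq0 (real_complex R)) -/Xc Xc0.
Qed.
End Pos2.
Section LAgen.
Variables (T : comPzRingType) (n d : nat).

Lemma dot_tr (K Y : 'M[T]_n) : \tr (K *m Y) = (mxvec Y^T *m (mxvec K)^T) 0 0.
Proof.
transitivity (\sum_i \sum_j K i j * Y j i).
  by apply: eq_bigr => i _; rewrite mxE.
rewrite pair_big /= mxE (reindex _ (curry_mxvec_bij _ _)) /=.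
by apply: eq_bigr => -[i j] _ /=; rewrite !mxE !mxvecE mxE mulrC.
Qed.

Lemma phi_tr (Bm : 'M[T]_(d, n * n)) (Y : 'M[T]_n) b :
  (mxvec Y^T *m Bm^T) 0 b = \tr (vec_mx (row b Bm) *m Y).
Proof.
rewrite dot_tr vec_mxK !mxE; apply: eq_bigr => k _; rewrite !mxE //.
Qed.

Lemma vec_sum (Bm : 'M[T]_(d, n * n)) (u : 'rV_d) :
  vec_mx (u *m Bm) = \sum_a u 0 a *: vec_mx (row a Bm).
Proof. by rewrite mulmx_sum_row linear_sum; apply: eq_bigr => a _; rewrite linearZ. Qed.

Lemma tr_sumL (Bm : 'M[T]_(d, n * n)) (u : 'rV_d) (Y : 'M[T]_n) :
  \tr (vec_mx (u *m Bm) *m Y) = \sum_a u 0 a * \tr (vec_mx (row a Bm) *m Y).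
Proof.
rewrite vec_sum mulmx_suml linear_sum; apply: eq_bigr => a _.
by rewrite -scalemxAl linearZ.
Qed.

Lemma tr_sumM (Bm : 'M[T]_(d, n * n)) (u : 'rV_d) (K M : 'M[T]_n) :
  \tr (K *m (M *m vec_mx (u *m Bm) *m M)) =
  \sum_a u 0 a * \tr (K *m (M *m vec_mx (row a Bm) *m M)).
Proof.
rewrite vec_sum mulmx_sumr mulmx_suml mulmx_sumr linear_sum; apply: eq_bigr => a _.
by rewrite -scalemxAr -scalemxAl -scalemxAr linearZ.
Qed.
End LAgen.

Section LA.
Variables (R : realType) (n d : nat) (B : 'M[R]_(d, n * n)).
Local Notation C := (R[i]).
Local Notation rc := (@real_complex_def R (Phant R)).
Local Notation Bc := (map_mx rc B).

Lemma LA (M : 'M[R]_n) :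
  (forall X, inL B X -> \tr (X *m M *m X *m M) = 0 -> X = 0) ->
  forall Rm : 'M[C]_n, exists A, inLC B A /\
    forall b, \tr (vec_mx (row b Bc) *m (Rm + map_mx rc M *m A *m map_mx rc M)) = 0.
Proof.
move=> hpos Rm.
pose H : 'M[R]_d := \matrix_(a, b) \tr (vec_mx (row b B) *m (M *m vec_mx (row a B) *m M)).
have hrow a : row a H = mxvec ((M *m vec_mx (row a B) *m M)^T) *m B^T.
  by apply/rowP => b; rewrite phi_tr !mxE.
have hsub : (H <= B^T)%MS by apply/row_subP => a; rewrite hrow submxMl.
have hker (u : 'rV_d) : u *m H = 0 -> u *m B = 0.
  move=> uH.
  have hX : inL B (vec_mx (u *m B)) by rewrite /inL vec_mxK submxMl.
  have e1 b : (u *m H) 0 b = \tr (vec_mx (row b B) *m (M *m vec_mx (u *m B) *m M)).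
    by rewrite tr_sumM !mxE; apply: eq_bigr => a _; rewrite mxE.
  have : \tr (vec_mx (u *m B) *m M *m vec_mx (u *m B) *m M) = 0.
    rewrite -!mulmxA (mulmxA M) tr_sumL.
    under eq_bigr do rewrite -e1 uH mxE mulr0.
    by rewrite big1.
  by move/(hpos _ hX) => /(congr1 mxvec); rewrite vec_mxK linear0.
have hrank : (\rank B <= \rank H)%N.
  have kz : kermx H *m B = 0.
    apply/row_matrixP => i; rewrite row_mul row0; apply: hker.
    by rewrite -row_mul mulmx_ker row0.
  have : (kermx H <= kermx B)%MS by apply/sub_kermxP.
  move/mxrankS; rewrite !mxrank_ker.
  have := rank_leq_row H; have := rank_leq_row B; lia.
have hBH : (B^T <= H)%MS.
  rewrite -(mxrank_leqif_sup hsub).2 mxrank_tr eqn_leq hrank andbT.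
  by have := mxrankS hsub; rewrite mxrank_tr.
have hBHc : (Bc^T <= map_mx rc H)%MS by rewrite map_trmx map_submx.
set r := mxvec Rm^T *m Bc^T.
have : (r <= map_mx rc H)%MS by apply: submx_trans (submxMl _ _) hBHc.
case/submxP => w hw.
exists (vec_mx (- w *m Bc)); split; first by rewrite /inLC vec_mxK submxMl.
move=> b; rewrite mulmxDr mxtraceD -phi_tr -/r tr_sumM hw.
rewrite mxE -big_split big1 // => a _ /=.
rewrite !mxE mulNr -!map_row -!map_vec_mx -!map_mxM (mxtrace_map (real_complex R)).
by rewrite subrr.
Qed.
End LA.
Lemma AC5 (Z : zmodType) (a b c e o : Z) : a + b + (c + e) - o = a - o + (c + b) + e.
Proof.
rewrite (addrC c b) -!addrA; congr (a + _); rewrite [RHS]addrCA; congr (b + _).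
by rewrite [RHS]addrCA (addrC e).
Qed.

Section PolyMx.
Variables (F : fieldType) (n : nat).
Local Notation PM := 'M[{poly F}]_n.

Definition coefmx j (P : PM) : 'M[F]_n := map_mx (fun q : {poly F} => q`_j) P.
Definition evalmx z (P : PM) : 'M[F]_n := map_mx (horner_eval z) P.
Definition cmx (A : 'M[F]_n) : PM := map_mx polyC A.
Definition divm m (P : PM) := forall i j, ('X^m %| P i j)%R.

Lemma coefmxD j P Q : coefmx j (P + Q) = coefmx j P + coefmx j Q.
Proof. by apply/matrixP => i k; rewrite !mxE coefD. Qed.
Lemma coefmxN j P : coefmx j (- P) = - coefmx j P.
Proof. by apply/matrixP => i k; rewrite !mxE coefN. Qed.
Lemma coefmxB j P Q : coefmx j (P - Q) = coefmx j P - coefmx j Q.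
Proof. by rewrite coefmxD coefmxN. Qed.
Lemma coefmx_cmx j A : coefmx j (cmx A) = if j == 0%N then A else 0.
Proof. by apply/matrixP => i k; rewrite !mxE coefC; case: (j == 0%N); rewrite ?mxE. Qed.
Lemma coefmx_XnZ j m Q : coefmx j ('X^m *: Q) = if (j < m)%N then 0 else coefmx (j - m) Q.
Proof. by apply/matrixP => i k; rewrite !mxE coefXnM; case: ifP; rewrite ?mxE. Qed.
Lemma coefmx_XZ j Q : coefmx j ('X *: Q) = if j == 0%N then 0 else coefmx j.-1 Q.
Proof. by rewrite -['X]expr1 coefmx_XnZ ltnS leqn0 subn1. Qed.
Lemma coefmx_tr j P : coefmx j P^T = (coefmx j P)^T.
Proof. by rewrite /coefmx map_trmx. Qed.

Lemma evalmxD z P Q : evalmx z (P + Q) = evalmx z P + evalmx z Q.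
Proof. exact: map_mxD. Qed.
Lemma evalmxN z P : evalmx z (- P) = - evalmx z P.
Proof. exact: map_mxN. Qed.
Lemma evalmxB z P Q : evalmx z (P - Q) = evalmx z P - evalmx z Q.
Proof. exact: map_mxB. Qed.
Lemma evalmxM z P Q : evalmx z (P *m Q) = evalmx z P *m evalmx z Q.
Proof. exact: map_mxM. Qed.
Lemma evalmx1 z : evalmx z 1%:M = 1%:M.
Proof. exact: map_mx1. Qed.
Lemma evalmx_cmx z A : evalmx z (cmx A) = A.
Proof. by apply/matrixP => i k; rewrite !mxE !horner_evalE hornerC. Qed.
Lemma evalmxZ z q P : evalmx z (q *: P) = q.[z] *: evalmx z P.
Proof. by apply/matrixP => i k; rewrite !mxE !horner_evalE hornerM. Qed.
Lemma evalmx_tr z P : evalmx z P^T = (evalmx z P)^T.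
Proof. by rewrite /evalmx map_trmx. Qed.
Lemma coefmx0 P : coefmx 0 P = evalmx 0 P.
Proof. by apply/matrixP => i k; rewrite !mxE horner_evalE horner_coef0. Qed.

Lemma cmx_mul A B : cmx (A *m B) = cmx A *m cmx B.
Proof. exact: map_mxM. Qed.
Lemma cmx1 : cmx 1%:M = 1%:M.
Proof. exact: map_mx1. Qed.

Lemma divmD m P Q : divm m P -> divm m Q -> divm m (P + Q).
Proof. by move=> hP hQ i j; rewrite mxE; apply: dvdp_add. Qed.
Lemma divmN m P : divm m P -> divm m (- P).
Proof. by move=> hP i j; rewrite mxE dvdpNr. Qed.
Lemma divmB m P Q : divm m P -> divm m Q -> divm m (P - Q).
Proof. by move=> hP hQ; apply: divmD => //; apply: divmN. Qed.
Lemma divm0 m : divm m 0.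
Proof. by move=> i j; rewrite mxE dvdp0. Qed.
Lemma divmMl m P Q : divm m Q -> divm m (P *m Q).
Proof.
move=> hQ i j; rewrite mxE; apply: (big_ind (fun x => 'X^m %| x)) => [|x y hx hy|k _]; first by rewrite dvdp0.
  by apply: dvdp_add.
by apply: dvdp_mull.
Qed.
Lemma divmMr m P Q : divm m P -> divm m (P *m Q).
Proof.
move=> hP i j; rewrite mxE; apply: (big_ind (fun x => 'X^m %| x)) => [|x y hx hy|k _]; first by rewrite dvdp0.
  by apply: dvdp_add.
by apply: dvdp_mulr.
Qed.
Lemma divm_le m m' P : (m' <= m)%N -> divm m P -> divm m' P.
Proof. by move=> hm hP i j; apply: dvdp_trans (hP i j); apply: dvdp_exp2l. Qed.
Lemma divm_XnZ m Q : divm m ('X^m *: Q).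
Proof. by move=> i j; rewrite mxE dvdp_mulr. Qed.
Lemma divm_XnZS m Q : divm 1 Q -> divm m.+1 ('X^m *: Q).
Proof. by move=> hQ i j; rewrite mxE exprSr dvdp_mul2l ?expf_neq0 ?polyX_eq0 // hQ. Qed.

Lemma divm1P Q : divm 1 Q <-> evalmx 0 Q = 0.
Proof.
split.
  move=> hQ; apply/matrixP => i j; rewrite !mxE /=; apply/eqP.
  by rewrite -/(root _ 0) root_factor_theorem polyC0 subr0 -(expr1 'X) hQ.
move=> h0 i j; have := congr1 (fun A : 'M_n => A i j) h0; rewrite /= !mxE horner_evalE => e.
by rewrite expr1 -(subr0 'X) -polyC0 -root_factor_theorem /root e.
Qed.

Lemma divm_fact m P : divm m P -> P = 'X^m *: map_mx (fun q : {poly F} => q %/ 'X^m) P.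
Proof. by move=> hP; apply/matrixP => i j; rewrite !mxE mulrC divpK. Qed.

Lemma sym_coef P : (forall j, (coefmx j P)^T = coefmx j P) -> P^T = P.
Proof.
move=> h; apply/matrixP => i k; apply/polyP => j.
by have := congr1 (fun A : 'M_n => A i k) (h j); rewrite !mxE.
Qed.
Lemma divmZ m c P : divm m P -> divm m (c *: P).
Proof. by move=> hP i j; rewrite mxE dvdp_mull. Qed.
Lemma coefmx_cmxM j A Q : coefmx j (cmx A *m Q) = A *m coefmx j Q.
Proof.
apply/matrixP => i k; rewrite !mxE coef_sum; apply: eq_bigr => l _.
by rewrite !mxE coefCM.
Qed.
Lemma divm_mxvec m P k : divm m P -> ('X^m %| mxvec P 0 k)%R.
Proof. by move=> hP; case/mxvec_indexP: k => i j; rewrite mxvecE. Qed.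
End PolyMx.
Section Constr.
Variables (R : realType) (n d : nat) (B : 'M[R]_(d, n * n)).
Local Notation C := (R[i]).
Local Notation rc := (@real_complex_def R (Phant R)).
Local Notation Bc := (map_mx rc B).
Hypothesis symB : sym_space B.

Lemma inLC_decomp K : inLC B K -> exists u : 'rV[C]_d, K = vec_mx (u *m Bc).
Proof. by case/submxP => u hu; exists u; rewrite -hu mxvecK. Qed.

Lemma inLC_sym K : inLC B K -> K^T = K.
Proof.
case/inLC_decomp => u ->; rewrite vec_sum linear_sum; apply: eq_bigr => a _.
rewrite linearZ /=; congr (_ *: _).
rewrite -map_row -map_vec_mx map_trmx symB //.
by rewrite /inL vec_mxK row_sub.
Qed.

Lemma perpP (Y : 'M[C]_n) : (forall b, \tr (vec_mx (row b Bc) *m Y) = 0) ->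
  forall K, inLC B K -> \tr (K *m Y) = 0.
Proof.
move=> h K /inLC_decomp [u ->]; rewrite tr_sumL big1 // => b _.
by rewrite h mulr0.
Qed.

Lemma inLCD K1 K2 : inLC B K1 -> inLC B K2 -> inLC B (K1 + K2).
Proof. by rewrite /inLC linearD; apply: addmx_sub. Qed.
Lemma inLCZ c K : inLC B K -> inLC B (c *: K).
Proof. by rewrite /inLC linearZ; apply: scalemx_sub. Qed.
Lemma inLC0 : inLC B (0 : 'M[C]_n).
Proof. by rewrite /inLC linear0 sub0mx. Qed.
Lemma inLC_real K : inL B K -> inLC B (map_mx rc K).
Proof. by rewrite /inLC /inL -map_mxvec map_submx. Qed.

Lemma Lperp0 : Lperp B (0 : 'M[C]_n).
Proof. by split; [rewrite trmx0 | move=> K _; rewrite mulmx0 linear0]. Qed.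
Lemma LperpN S : Lperp B S -> Lperp B (- S).
Proof.
case=> sS hS; split; first by rewrite linearN /= sS.
by move=> K hK; rewrite mulmxN linearN /= hS // oppr0.
Qed.

Variables (K0 : 'M[R]_n) (S0 : 'M[C]_n).
Hypotheses (hK0 : inL B K0) (pdK0 : posdef K0) (sS0 : S0^T = S0).

Local Notation K0c := (map_mx rc K0).
Local Notation M := (invmx K0).
Local Notation Mc := (map_mx rc (invmx K0)).

Lemma K0sym : K0^T = K0. Proof. exact: symB. Qed.

Lemma K0unit : K0 \in unitmx.
Proof.
apply/negPn/negP => hn.
have : kermx K0^T != 0 by rewrite kermx_eq0 row_free_unit unitmx_tr.
case/rowV0Pn => u /sub_kermxP hu un0.
have := pdK0 (v := u^T); rewrite trmx_eq0 => /(_ un0).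
rewrite trmxK -mulmxA (_ : K0 *m u^T = 0) ?mulmx0 ?mxE ?ltxx //.
by rewrite -[K0]trmxK -trmx_mul hu trmx0.
Qed.

Lemma Msym : M^T = M.
Proof. by rewrite trmx_inv K0sym. Qed.

Lemma Mpd : posdef M.
Proof.
move=> v vn0; set w := M *m v.
have ev : v = K0 *m w by rewrite /w mulmxA mulmxV ?K0unit // mul1mx.
have wn0 : w != 0 by apply: contra vn0 => /eqP w0; rewrite ev w0 mulmx0.
have e : v^T *m M *m v = w^T *m K0 *m w.
  by rewrite {1}ev trmx_mul K0sym -!mulmxA.
by rewrite e; apply: pdK0.
Qed.

Lemma K0cMc : K0c *m Mc = 1%:M.
Proof. by rewrite -map_mxM mulmxV ?K0unit // map_mx1. Qed.
Lemma McK0c : Mc *m K0c = 1%:M.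
Proof. by rewrite -map_mxM mulVmx ?K0unit // map_mx1. Qed.
Lemma Mcsym : Mc^T = Mc.
Proof. by rewrite map_trmx Msym. Qed.

Lemma LAc (Rm : 'M[C]_n) : exists A, inLC B A /\
    forall K, inLC B K -> \tr (K *m (Rm + Mc *m A *m Mc)) = 0.
Proof.
have hpos X : inL B X -> \tr (X *m M *m X *m M) = 0 -> X = 0.
  by move=> hX; apply: pos_tr Msym Mpd (symB hX).
have [A [hA hb]] := LA hpos Rm.
by exists A; split => //; apply: perpP.
Qed.

Definition Slam : 'M[{poly C}]_n := cmx Mc + 'X *: cmx (S0 - Mc).

Lemma Slam_sym : Slam^T = Slam.
Proof.
by rewrite /Slam linearD linearZ /= /cmx !map_trmx Msym linearB /= sS0 Mcsym.
Qed.

Definition Inv m (P Sg : 'M[{poly C}]_n) : Prop :=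
  [/\ forall j, inLC B (coefmx j P),
      Sg^T = Sg,
      divm 1 (P - cmx K0c) &
      divm 1 (Sg - cmx Mc)] /\
  (divm m (P *m Sg - 1%:M) /\
      forall j, (j < m)%N -> Lperp B (coefmx j (Slam - Sg))).

Lemma Inv1 : Inv 1 (cmx K0c) (cmx Mc).
Proof.
split; split.
- by move=> j; rewrite coefmx_cmx; case: eqP => _; [apply: inLC_real | apply: inLC0].
- by rewrite /cmx map_trmx Mcsym.
- by rewrite subrr; apply: divm0.
- by rewrite subrr; apply: divm0.
- by rewrite -cmx_mul K0cMc cmx1 subrr; apply: divm0.
- move=> j; rewrite ltnS leqn0 => /eqP ->.
  rewrite /Slam addrAC subrr add0r coefmx_XZ eqxx; exact: Lperp0.
Qed.

Lemma Inv_step m P Sg : (0 < m)%N -> Inv m P Sg -> exists P' Sg', Inv m.+1 P' Sg'.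
Proof.
move=> m0 [[hP hS hP0 hS0] [hPS hL]].
have PT : P^T = P by apply: sym_coef => j; rewrite inLC_sym.
set F := map_mx (fun q : {poly C} => q %/ 'X^m) (P *m Sg - 1%:M).
have eF : P *m Sg - 1%:M = 'X^m *: F := divm_fact hPS.
set E := coefmx 0 F.
have ev0S : evalmx 0 Sg = Mc.
  by move/divm1P: hS0; rewrite evalmxB evalmx_cmx => /eqP; rewrite subr_eq0 => /eqP.
have ev0P : evalmx 0 P = K0c.
  by move/divm1P: hP0; rewrite evalmxB evalmx_cmx => /eqP; rewrite subr_eq0 => /eqP.
have SF : Sg *m F = F^T *m Sg.
  have h : Sg *m ('X^m *: F) = ('X^m *: F)^T *m Sg.
    rewrite -eF [X in _ = X *m _]linearB /= trmx_mul PT hS trmx1 mulmxBr mulmxBl mulmxA mulmx1 mul1mx //.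
  move: h; rewrite !linearZ /= -scalemxAl => /eqP.
  rewrite -subr_eq0 -scalerBr scalemx_eq0 expf_eq0 polyX_eq0 andbF /= subr_eq0.
  by move/eqP.
have symME : (Mc *m E)^T = Mc *m E.
  have := congr1 (evalmx 0) SF; rewrite !evalmxM evalmx_tr ev0S -coefmx0 -/E => e.
  by rewrite trmx_mul Mcsym e.
set Rm := coefmx m Slam - coefmx m Sg + Mc *m E.
have [A [hA hAp]] := LAc Rm.
have Asym := inLC_sym hA.
have MAMsym : (Mc *m A *m Mc)^T = Mc *m A *m Mc.
  by rewrite !trmx_mul Asym Mcsym mulmxA.
set G := - (Mc *m E) - Mc *m A *m Mc.
have Gsym : G^T = G by rewrite /G linearB linearN /= symME MAMsym.
exists (P + 'X^m *: cmx A), (Sg + 'X^m *: cmx G).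
split; split.
- move=> j; rewrite coefmxD coefmx_XnZ; case: ifP => _; first by rewrite addr0.
  apply: inLCD => //; rewrite coefmx_cmx; case: eqP => _; [exact: hA | exact: inLC0].
- by rewrite linearD linearZ /= /cmx map_trmx Gsym hS.
- rewrite addrAC; apply: divmD => //; apply: (@divm_le _ _ m) => //; apply: divm_XnZ.
- rewrite addrAC; apply: divmD => //; apply: (@divm_le _ _ m) => //; apply: divm_XnZ.
- have expand : (P + 'X^m *: cmx A) *m (Sg + 'X^m *: cmx G) - 1%:M =
      (P *m Sg - 1%:M) + 'X^m *: (cmx A *m Sg + P *m cmx G) + ('X^m * 'X^m) *: (cmx A *m cmx G).
    rewrite mulmxDl !mulmxDr -!scalemxAl -!scalemxAr scalerA scalerDr.
    exact: AC5.
  rewrite expand eF -scalerDr; apply: divmD.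
    apply: divm_XnZS; apply/divm1P.
    rewrite !evalmxD !evalmxM !evalmx_cmx ev0S ev0P -coefmx0 -/E.
    rewrite /G mulmxBr mulmxN !mulmxA K0cMc !mul1mx.
    by rewrite addrCA addNKr subrr.
  rewrite -exprD; apply: (@divm_le _ _ (m + m)); last exact: divm_XnZ.
  by move: m0; clear; lia.
- move=> j; rewrite ltnS leq_eqVlt => /orP [/eqP ->|hj].
    rewrite opprD addrA coefmxB coefmx_XnZ ltnn subnn coefmx_cmx eqxx.
    have -> : coefmx m (Slam - Sg) - G = Rm + Mc *m A *m Mc.
      by rewrite /G coefmxB opprD !opprK addrA.
    split; last exact: hAp.
    rewrite linearD /= MAMsym /Rm !linearD linearN /= -!coefmx_tr Slam_sym hS symME //.
  rewrite opprD addrA coefmxB coefmx_XnZ hj subr0; exact: hL.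
Qed.

Lemma Inv_all m : (0 < m)%N -> exists P Sg, Inv m P Sg.
Proof.
elim: m => // -[_ _|m ih _]; first by exists (cmx K0c), (cmx Mc); exact: Inv1.
by have [P [Sg h]] := ih isT; apply: Inv_step h.
Qed.
End Constr.
Section Final.
Variables (R : realType) (n d : nat) (B : 'M[R]_(d, n * n)).
Local Notation C := (R[i]).
Local Notation rc := (@real_complex_def R (Phant R)).
Local Notation Bc := (map_mx rc B).
Hypothesis symB : sym_space B.

Lemma inLC_eval (P : 'M[{poly C}]_n) z :
  (forall j, inLC B (coefmx j P)) -> inLC B (evalmx z P).
Proof.
move=> hP; rewrite /inLC submxE; apply/eqP.
have W0 : mxvec P *m map_mx polyC (cokermx Bc) = 0.
  apply/rowP => k; rewrite !mxE; apply/polyP => j; rewrite coef0 coef_sum.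
  have := hP j; rewrite /inLC submxE => /eqP /rowP /(_ k); rewrite !mxE => e.
  rewrite -[RHS]e; apply: eq_bigr => l _; rewrite !mxE coefMC; congr (_ * _).
  by rewrite /coefmx -map_mxvec mxE.
have hQ : map_mx (horner_eval z) (map_mx polyC (cokermx Bc)) = cokermx Bc.
  by apply/matrixP => a b; rewrite !mxE horner_evalE hornerC.
have := congr1 (map_mx (horner_eval z)) W0.
by rewrite map_mxM map_mx0 map_mxvec hQ.
Qed.

Lemma Lperp_eval (Sg : 'M[{poly C}]_n) z :
  (forall j, Lperp B (coefmx j Sg)) -> Lperp B (evalmx z Sg).
Proof.
move=> hS; split.
  by rewrite -evalmx_tr sym_coef // => j; case: (hS j).
move=> K hK.
have -> : K *m evalmx z Sg = evalmx z (cmx K *m Sg) by rewrite evalmxM evalmx_cmx.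
rewrite /evalmx (mxtrace_map (horner_eval z)).
have -> : \tr (cmx K *m Sg) = 0.
  apply/polyP => j; rewrite coef0.
  rewrite -[LHS]/(coefp j (\tr (cmx K *m Sg))) -(mxtrace_map (coefp j)).
  have -> : map_mx (coefp j) (cmx K *m Sg) = coefmx j (cmx K *m Sg) by [].
  by rewrite coefmx_cmxM; case: (hS j) => _; apply.
exact: horner0.
Qed.

Lemma poly_eq0_all (q : {poly C}) : (forall z, q.[z] = 0) -> q = 0.
Proof.
move=> h; apply/eqP; apply/negPn/negP => qn0.
set rs := [seq i%:R | i <- iota 0 (size q)] : seq C.
have hall : all (root q) rs by apply/allP => x /mapP [i _ ->]; rewrite /root h.
have hu : uniq rs.
  rewrite map_inj_uniq ?iota_uniq //.
  by move=> i j /eqP; rewrite eqr_nat => /eqP.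
by have := max_poly_roots qn0 hall hu; rewrite size_map size_iota ltnn.
Qed.

Variables (K0 : 'M[R]_n) (S0 : 'M[C]_n).
Hypotheses (hK0 : inL B K0) (pdK0 : posdef K0) (sS0 : S0^T = S0).
Variable p : mpoly.mpoly (n * n) C.
Hypothesis pS0 : mx_eval p S0 != 0.
Hypothesis noML : forall S, S^T = S -> mx_eval p S != 0 -> forall X, ~ ML_set B S X.

Local Notation K0c := (map_mx rc K0).
Local Notation Mc := (map_mx rc (invmx K0)).
Local Notation Slam := (Slam K0 S0).

Lemma final_contra : False.
Proof.
set N := msize p.
pose g := homE (polyC : {rmorphism C -> {poly C}}) N p 1 (fun i => mxvec Slam 0 i).
have evS (Q : 'M[{poly C}]_n) z i : (mxvec Q 0 i).[z] = mxvec (evalmx z Q) 0 i.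
  by rewrite /evalmx -map_mxvec mxE horner_evalE.
have g1 : g.[1] = mx_eval p S0.
  rewrite /g homE_horner hornerC.
  rewrite (homE_ext _ _ _ _ (fun i => evS _ _ i)) homE_meval /mx_eval.
  apply: meval_eq => i /=.
  rewrite /Slam evalmxD evalmxZ !evalmx_cmx hornerX scale1r.
  by rewrite addrC subrK.
have gn0 : g != 0 by apply: contra pS0 => /eqP g0; rewrite -g1 g0 horner0.
set mm := size g.
have mm0 : (0 < mm)%N by rewrite lt0n size_poly_eq0.
have [P [Sg [[hP hS hP0 hS0] [hPS hL]]]] := Inv_all symB hK0 pdK0 sS0 mm0.
set Sig := map_mx (take_poly mm) (Slam - Sg).
have hSig j : Lperp B (coefmx j Sig).
  have -> : coefmx j Sig = if (j < mm)%N then coefmx j (Slam - Sg) else 0.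
    by apply/matrixP => a b; rewrite !mxE coef_take_poly; case: ifP; rewrite ?mxE.
  case: ifP => hj; [exact: hL | exact: Lperp0].
have dSig : divm mm (Slam - Sg - Sig).
  move=> a b; set q := (Slam - Sg) a b.
  have -> : (Slam - Sg - Sig) a b = q - take_poly mm q by rewrite /q !mxE.
  rewrite -{1}(poly_take_drop mm q) addrAC subrr add0r.
  by rewrite dvdp_mull.
set D := \det P; set Y := \adj P.
have dYD : divm mm (Y + D *: Sig - D *: Slam).
  have -> : Y + D *: Sig - D *: Slam = - (Y *m (P *m Sg - 1%:M)) - D *: (Slam - Sg - Sig).
    rewrite mulmxBr mulmxA mul_adj_mx mul_scalar_mx mulmx1.
    by apply/matrixP => a b; rewrite !mxE /D; ring.
  by apply: divmB; [apply: divmN; apply: divmMl | apply: divmZ].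
pose h := homE (polyC : {rmorphism C -> {poly C}}) N p D (fun i => mxvec (Y + D *: Sig) 0 i).
have hcong : cong mm h (D ^+ N * g).
  rewrite /g -homE_scale //.
  apply: homE_cong => i; rewrite /cong.
  have -> : mxvec (Y + D *: Sig) 0 i - D * mxvec Slam 0 i = mxvec (Y + D *: Sig - D *: Slam) 0 i.
    by rewrite linearB linearZ /= !mxE.
  exact: divm_mxvec.
have Psym : P^T = P by apply: sym_coef => j; rewrite (inLC_sym symB (hP j)).
have Sigsym : Sig^T = Sig by apply: sym_coef => j; case: (hSig j).
have ev0P : evalmx 0 P = K0c.
  by move/divm1P: hP0; rewrite evalmxB evalmx_cmx => /eqP; rewrite subr_eq0 => /eqP.
have hD00 : D.[0] != 0.
  have e0 : D.[0] = \det (evalmx 0 P) by rewrite /evalmx det_map_mx.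
  rewrite e0 ev0P det_map_mx.
  have := K0unit pdK0; rewrite unitmxE unitfE.
  by apply: contra => /eqP; rewrite -(rmorph0 (real_complex R)) => /complexI ->.
have hD0 : D != 0 by apply: contraNneq hD00 => ->; rewrite horner0.
have hz z : (h * D).[z] = 0.
  rewrite hornerM; have [Dz0|Dzn0] := eqVneq D.[z] 0; first by rewrite Dz0 mulr0.
  set Pz := evalmx z P.
  have detPz : \det Pz = D.[z] by rewrite /Pz /evalmx det_map_mx.
  have Pzu : Pz \in unitmx by rewrite unitmxE detPz unitfE.
  have adjPz : \adj Pz = D.[z] *: invmx Pz.
    by rewrite -detPz -[LHS]mul1mx -(mulVmx Pzu) -mulmxA mul_mx_adj mul_mx_scalar.
  set Sz := evalmx z Sig.
  set Z := invmx Pz + Sz.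
  have hev : evalmx z (Y + D *: Sig) = D.[z] *: Z.
    by rewrite evalmxD evalmxZ /Y /evalmx map_mx_adj -/(evalmx z P) -/Pz adjPz scalerDr.
  have -> : h.[z] = D.[z] ^+ N * mx_eval p Z.
    rewrite /h homE_horner (homE_ext _ _ _ _ (fun i => evS _ _ i)) hev.
    rewrite (homE_ext _ _ _ _ (y := fun i => D.[z] * mxvec Z 0 i)); last first.
      by move=> i; rewrite linearZ mxE.
    by rewrite homE_scale // homE_meval.
  suff -> : mx_eval p Z = 0 by rewrite mulr0 mul0r.
  apply/eqP; apply/negPn/negP => pZ.
  have ZT : Z^T = Z.
    by rewrite /Z linearD /= trmx_inv /Pz /Sz -!evalmx_tr Psym Sigsym.
  apply: (noML ZT pZ (X := invmx Pz)); split.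
    move=> q hq; apply: hq; exists Pz; split => //.
    exact: inLC_eval.
  exists (- Sz); split; first by apply: LperpN; apply: Lperp_eval.
  by rewrite /Z addrC addrK.
have h0 : h = 0.
  by have := poly_eq0_all hz => /eqP; rewrite mulf_eq0 (negPf hD0) orbF => /eqP.
have cop : coprimep ('X^mm) (D ^+ N).
  apply: coprimep_expr; apply: coprimep_expl.
  by have := coprimep_XsubC D 0; rewrite polyC0 subr0 coprimep_sym => ->; rewrite /root.
have dg : ('X^mm %| g)%R.
  by move: hcong; rewrite /cong h0 sub0r dvdpNr Gauss_dvdpr.
by have := dvdp_leq gn0 dg; rewrite size_polyXn ltnn.
Qed.
End Final.

Theorem corollary6p2 (R : realType) (n d : nat) (B : 'M[R]_(d, n * n)) :
  sym_space B -> regular B -> ML_degree_is B 0 ->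
  forall K : 'M[R]_n, inL B K -> ~ posdef K.
Proof.
move=> symB _ [p [[S0 [sS0 pS0]] hgen]] K hK pdK.
have noML S : S^T = S -> mx_eval p S != 0 -> forall X, ~ ML_set B S X.
  move=> sS pS X hX; have [s [_ hs hX']] := hgen S sS pS.
  by move/hX': hX; move/eqP: hs; rewrite size_eq0 => /eqP ->.
exact: (final_contra symB hK pdK sS0 pS0 noML).
Qed.
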